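(* Let $f:\mathbb{R}^n\to\overline{\mathbb{R}}$ be a proper closed convex function with conjugate $f^*$, and let $K=\{(x,r)\in\mathbb{R}^n\times\mathbb{R} : x=0,\ r\ge 0\}$. A subset $F\subseteq\operatorname{epi} f$ is a $K$-minimal exposed face of $\operatorname{epi} f$ if and only if there is some $\bar u\in\operatorname{dom} f^*$ with $\partial f^*(\bar u)\neq\emptyset$ such that $$F=\{(x,f(x))\in\mathbb{R}^n\times\mathbb{R} : \bar u\in\partial f(x)\}.$$ Moreover, a subset $F^*\subseteq\operatorname{epi} f^*$ is a $K$-minimal exposed face of $\operatorname{epi} f^*$ if and only if there is some $\bar x\in\operatorname{dom} f$ with $\partial f(\bar x)\neq\emptyset$ such that $$F^*=\{(u,f^*(u))\in\mathbb{R}^n\times\mathbb{R} : u\in\partial f(\bar x)\}.$$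
   Context: $\overline{\mathbb{R}}=\mathbb{R}\cup\{\pm\infty\}$; $f^*(u)=\sup_x(\langle x,u\rangle-f(x))$. An exposed face of a convex set $A\subseteq\mathbb{R}^{n+1}$ is a set of the form $A\cap H$ where $H$ is a supporting hyperplane to $A$ (i.e. $A\cap H\neq\emptyset$ and $A$ lies in one closed half-space bounded by $H$). A point $p\in A$ is minimal with respect to $K$ if $(\{p\}-K\setminus(-K))\cap A=\emptyset$; a face is $K$-minimal if all its points are minimal with respect to $K$. *)

(* Defs.v *)
(* R : realType, points of R^n are row vectors 'rV[R]_n,
   points of R^(n+1) are pairs ('rV[R]_n * R), values of f live in \bar R. *)
From HB Require Import structures.
From mathcomp Require Import all_boot all_order all_algebra.
From mathcomp Require Import all_classical all_reals all_analysis.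
Set Implicit Arguments. Unset Strict Implicit. Unset Printing Implicit Defensive.
Import Order.TTheory GRing.Theory Num.Theory.
Import numFieldNormedType.Exports.
Local Open Scope classical_set_scope.
Local Open Scope ring_scope.

Section Defs.
Context {R : realType} {n : nat}.

Definition dotp (x u : 'rV[R]_n) : R := \sum_(i < n) x ord0 i * u ord0 i.

Definition dotp1 (a p : 'rV[R]_n * R) : R := dotp a.1 p.1 + a.2 * p.2.

Definition epi (f : 'rV[R]_n -> \bar R) : set ('rV[R]_n * R) :=
  [set p | (f p.1 <= p.2%:E)%E].

Definition dom (f : 'rV[R]_n -> \bar R) : set 'rV[R]_n :=
  [set x | (f x < +oo)%E].

Definition proper_fun (f : 'rV[R]_n -> \bar R) : Prop :=
  (forall x, f x != -oo%E) /\ (exists x, (f x < +oo)%E).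

Definition convex_set1 (A : set ('rV[R]_n * R)) : Prop :=
  forall p q t, A p -> A q -> 0 <= t -> t <= 1 ->
    A (t *: p.1 + (1 - t) *: q.1, t * p.2 + (1 - t) * q.2).

Definition convex_fun (f : 'rV[R]_n -> \bar R) : Prop := convex_set1 (epi f).

Definition closed_fun (f : 'rV[R]_n -> \bar R) : Prop := closed (epi f).

Definition conj_fun (f : 'rV[R]_n -> \bar R) : 'rV[R]_n -> \bar R :=
  fun u => ereal_sup [set ((dotp x u)%:E - f x)%E | x in setT].

(* u \in \partial f(x)  (empty when f x is not finite) *)
Definition subdiff (f : 'rV[R]_n -> \bar R) (x u : 'rV[R]_n) : Prop :=
  f x \is a fin_num /\ forall y, (f x + (dotp (y - x) u)%:E <= f y)%E.

Definition exposed_face (A F : set ('rV[R]_n * R)) : Prop :=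
  exists (a : 'rV[R]_n * R) (b : R),
    a != (0, 0) /\
    (exists p, A p /\ dotp1 a p = b) /\
    (forall p, A p -> dotp1 a p <= b) /\
    F = A `&` [set p | dotp1 a p = b].

Definition Kcone : set ('rV[R]_n * R) := [set k | k.1 = 0 /\ 0 <= k.2].

Definition Kminimal_point (K A : set ('rV[R]_n * R)) (p : 'rV[R]_n * R) : Prop :=
  A p /\
  [set (p.1 - k.1, p.2 - k.2) | k in K `\` [set (- q.1, - q.2) | q in K]] `&` A
    = set0.

Definition Kminimal_face (K A F : set ('rV[R]_n * R)) : Prop :=
  forall p, F p -> Kminimal_point K A p.

End Defs.

(* Main.v *)
Require Import Defs.
From HB Require Import structures.
From mathcomp Require Import all_boot all_order all_algebra.
From mathcomp Require Import all_classical all_reals all_analysis.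
From mathcomp Require Import ring lra.
Import Order.TTheory GRing.Theory Num.Theory.
Import numFieldNormedType.Exports.
Local Open Scope classical_set_scope.
Local Open Scope ring_scope.

Section S.
Context {R : realType} {n : nat}.
Implicit Types (x y u v : 'rV[R]_n).

Lemma dotpC x u : dotp x u = dotp u x.
Proof. by apply: eq_bigr => i _; rewrite mulrC. Qed.
Lemma dotpDl x y u : dotp (x + y) u = dotp x u + dotp y u.
Proof. by rewrite /dotp -big_split; apply: eq_bigr => i _; rewrite !mxE mulrDl. Qed.
Lemma dotpZl a x u : dotp (a *: x) u = a * dotp x u.
Proof. by rewrite /dotp mulr_sumr; apply: eq_bigr => i _; rewrite !mxE mulrA. Qed.
Lemma dotpNl x u : dotp (- x) u = - dotp x u.
Proof. by rewrite -scaleN1r dotpZl mulN1r. Qed.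
Lemma dotpBl x y u : dotp (x - y) u = dotp x u - dotp y u.
Proof. by rewrite dotpDl dotpNl. Qed.
Lemma dotpDr x u v : dotp x (u + v) = dotp x u + dotp x v.
Proof. by rewrite dotpC dotpDl !(dotpC x). Qed.
Lemma dotpZr a x u : dotp x (a *: u) = a * dotp x u.
Proof. by rewrite dotpC dotpZl dotpC. Qed.
Lemma dotpBr x u v : dotp x (u - v) = dotp x u - dotp x v.
Proof. by rewrite dotpC dotpBl !(dotpC x). Qed.
Lemma dotp_ge0 x : 0 <= dotp x x.
Proof. by apply: sumr_ge0 => i _; rewrite -expr2 sqr_ge0. Qed.
Lemma dotp_eq0 x : dotp x x = 0 -> x = 0.
Proof.
move=> /eqP; rewrite psumr_eq0 => [/allP H|i _]; last by rewrite -expr2 sqr_ge0.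
apply/rowP => i; rewrite mxE; apply/eqP.
have := H i; rewrite mem_index_enum => /(_ isT)/implyP/(_ isT).
by rewrite mulf_eq0 orbb.
Qed.
End S.

Section S.
Context {R : realType} {n : nat}.

Definition gd (z p : 'rV[R]_n * R) : R :=
  dotp (z.1 - p.1) (z.1 - p.1) + (z.2 - p.2) * (z.2 - p.2).

Lemma gd_cont z : continuous (gd z).
Proof.
have cf i : continuous (fun p : 'rV[R]_n * R => z.1 ord0 i - p.1 ord0 i).
  move=> p; apply: continuousB; first exact: cst_continuous.
  apply: (@continuous_comp _ _ _ fst (fun M : 'rV[R]_n => M ord0 i)).
    exact: cvg_fst.
  exact: coord_continuous.
have cs : continuous (fun p : 'rV[R]_n * R => z.2 - p.2).
  move=> p; apply: (@continuousB _ _ _ (fun=> z.2) snd); first exact: cst_continuous.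
  exact: cvg_snd.
have cd : continuous (fun q : 'rV[R]_n * R =>
    \sum_(i < n) (z.1 ord0 i - q.1 ord0 i) * (z.1 ord0 i - q.1 ord0 i)).
  apply: (continuous_big (op := +%R)) => //; first exact: add_continuous.
  move=> i _ q; apply: (@continuousM _ _ (fun q : 'rV[R]_n * R => z.1 ord0 i - q.1 ord0 i)); exact: cf.
have -> : gd z = (fun q : 'rV[R]_n * R =>
    \sum_(i < n) (z.1 ord0 i - q.1 ord0 i) * (z.1 ord0 i - q.1 ord0 i)) +
    (fun q : 'rV[R]_n * R => (z.2 - q.2) * (z.2 - q.2)).
  apply/funext => q; rewrite /gd /dotp /=; congr (_ + _).
  by apply: eq_bigr => i _; rewrite !mxE.
move=> p; apply: continuousD; first exact: cd.
apply: (@continuousM _ _ (fun q : 'rV[R]_n * R => z.2 - q.2)); exact: cs.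
Qed.
End S.

Section S2.
Context {R : realType} {n : nat}.

Lemma sq_le_dotp (x : 'rV[R]_n) i : x ord0 i * x ord0 i <= dotp x x.
Proof.
rewrite /dotp (bigD1 i) //= lerDl; apply: sumr_ge0 => j _.
by rewrite -expr2 sqr_ge0.
Qed.

Lemma nearest (C : set ('rV[R]_n * R)) z : closed C -> C !=set0 ->
  exists2 p0, C p0 & forall p, C p -> gd z p0 <= gd z p.
Proof.
move=> Ccl [p1 Cp1].
pose D := gd z p1.
pose B := [set v : 'rV[R]_n | forall i, `[z.1 ord0 i - (D+1), z.1 ord0 i + (D+1)]%classic (v ord0 i)]
   `*` `[z.2 - (D+1), z.2 + (D+1)]%classic.
have inB p : gd z p <= D -> B p.
  move=> h; have D0 : 0 <= D.
    apply: le_trans h; rewrite /gd; apply: addr_ge0; first exact: dotp_ge0.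
    by rewrite -expr2 sqr_ge0.
  have h2 : (z.2 - p.2) * (z.2 - p.2) <= D.
    by apply: le_trans h; rewrite /gd lerDr dotp_ge0.
  split.
    move=> i /=; rewrite in_itv /=.
    have := sq_le_dotp (z.1 - p.1) i; rewrite !mxE => h1.
    have h3 : (z.1 ord0 i - p.1 ord0 i) * (z.1 ord0 i - p.1 ord0 i) <= D.
      apply: le_trans h1 _; apply: le_trans h; rewrite /gd lerDl -expr2 sqr_ge0 //.
    apply/andP; split; nra.
  by rewrite /= in_itv /=; apply/andP; split; nra.
have cK : compact (B `&` C).
  apply: compact_closedI => //; apply: compact_setX; last exact: segment_compact.
  by apply: (@rV_compact _ _ (fun i => `[z.1 ord0 i - (D+1), z.1 ord0 i + (D+1)]%classic)) => i; exact: segment_compact.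
have A0 : (B `&` C) !=set0 by exists p1; split => //; apply: inB.
have cf : {within B `&` C, continuous (gd z)}.
  by apply: continuous_subspaceT; exact: gd_cont.
have [c cK1 cmin] := @compact_EVT_min _ R (gd z) _ A0 cK cf.
move: cK1 => /set_mem [Bc Cc].
exists c => // p Cp.
have [/inB Bp|/ltW Dp] := leP (gd z p) D.
  by apply: cmin; apply/mem_set.
apply: le_trans Dp; apply: cmin; apply/mem_set; split => //; exact: inB.
Qed.
End S2.

Section S3.
Context {R : realType} {n : nat}.

Lemma separation (C : set ('rV[R]_n * R)) z : closed C -> convex_set1 C ->
  C !=set0 -> ~ C z ->
  exists a al be, (forall p, C p -> dotp p.1 a + al * p.2 <= be) /\
    be < dotp z.1 a + al * z.2.
Proof.
move=> Ccl Ccv C0 nCz.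
have [p0 Cp0 p0min] := @nearest _ _ C z Ccl C0.
pose a := z.1 - p0.1; pose al := z.2 - p0.2.
exists a, al, (dotp p0.1 a + al * p0.2); split.
  move=> p Cp.
  pose w := p.1 - p0.1.
  pose e := dotp w a + al * (p.2 - p0.2).
  pose d := dotp w w + (p.2 - p0.2) * (p.2 - p0.2).
  have d0 : 0 <= d by apply: addr_ge0; [exact: dotp_ge0| rewrite -expr2 sqr_ge0].
  have key t : 0 <= t -> t <= 1 -> 2 * t * e <= t * t * d.
    move=> t0 t1; have := p0min _ (Ccv _ _ _ Cp Cp0 t0 t1).
    have -> : gd z (t *: p.1 + (1 - t) *: p0.1, t * p.2 + (1 - t) * p0.2) =
              gd z p0 - 2 * t * e + t * t * d.
      rewrite /gd /=.
      have -> : z.1 - (t *: p.1 + (1 - t) *: p0.1) = a - t *: w.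
        by rewrite /a /w scalerBr scalerBl scale1r; apply/rowP => i; rewrite !mxE; ring.
      rewrite -/a /e /d.
      rewrite /w !dotpBl !dotpBr !dotpZl !dotpZr !dotpBl !dotpBr /al ?(dotpC p.1 z.1) ?(dotpC p0.1 z.1) ?(dotpC p0.1 p.1).
      ring.
    lra.
  suff : e <= 0.
    rewrite /e /w /al dotpBl => h; nra.
  rewrite leNgt; apply/negP => e0.
  pose t := e / (e + d).
  have ed : 0 < e + d by lra.
  have te : t * (e + d) = e by rewrite /t divfK // gt_eqF.
  have t0 : 0 < t by rewrite /t divr_gt0.
  have t1 : t <= 1 by rewrite /t ler_pdivrMr // mul1r; lra.
  have := key t (ltW t0) t1; nra.
rewrite -subr_gt0.
have -> : dotp z.1 a + al * z.2 - (dotp p0.1 a + al * p0.2) = gd z p0.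
  have ha : dotp a a = dotp z.1 a - dotp p0.1 a by rewrite {1}/a dotpBl.
  by rewrite /gd -/a ha /al; ring.
rewrite lt_neqAle; apply/andP; split; last first.
  by rewrite /gd; apply: addr_ge0; [exact: dotp_ge0| rewrite -expr2 sqr_ge0].
apply/negP => /eqP/esym h.
have h1 : dotp a a = 0.
  apply/eqP; rewrite eq_le dotp_ge0 andbT.
  by move: h; rewrite /gd -/a -/al => h; have := sqr_ge0 al; rewrite expr2; lra.
have h2 : al = 0.
  move: h; rewrite /gd -/a -/al h1 add0r => /eqP; rewrite mulf_eq0 orbb => /eqP //.
apply: nCz; have -> : z = p0; last exact: Cp0.
have := dotp_eq0 _ h1; rewrite /a => /eqP; rewrite subr_eq0 => /eqP.
move: h2; rewrite /al => /eqP; rewrite subr_eq0 => /eqP.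
by move=> E2 E1; rewrite [z]surjective_pairing [p0]surjective_pairing E1 E2.
Qed.
End S3.

Set Implicit Arguments. Unset Strict Implicit.

Section C.
Context {R : realType} {n : nat}.
Implicit Types (f g : 'rV[R]_n -> \bar R) (x y u v : 'rV[R]_n).

Lemma conj_ge f x u : ((dotp x u)%:E - f x <= conj_fun f u)%E.
Proof. by apply: ereal_sup_ubound; exists x. Qed.

Lemma conj_le f u c : (forall x, ((dotp x u)%:E - f x <= c)%E) -> (conj_fun f u <= c)%E.
Proof. by move=> h; apply: ge_ereal_sup => _ [x _ <-]. Qed.

Lemma conj_le_epi f u c : (forall y, f y != -oo%E) ->
  (forall y r, epi f (y, r) -> dotp y u - r <= c) -> (conj_fun f u <= c%:E)%E.
Proof.
move=> fn h; apply: conj_le => y.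
case E: (f y) => [s| |].
- by rewrite -EFinB lee_fin; apply: h; rewrite /epi /= E.
- by rewrite /= leNye.
- by have := fn y; rewrite E.
Qed.

Lemma epi_of_sup g u c : (forall y, ((dotp y u)%:E - g y <= c%:E)%E) ->
  forall y r, epi g (y, r) -> dotp y u - r <= c.
Proof.
move=> h y r; rewrite /epi /=; have := h y.
case: (g y) => [s| |] //=.
- by rewrite -EFinB !lee_fin => h1 h2; lra.
Qed.

Lemma proper_fin f : proper_fun f -> exists x r, f x = r%:E.
Proof.
move=> [fn [x fx]]; move: (fn x) fx; case E: (f x) => [r| |] //= _ _.
by exists x, r.
Qed.

Lemma sep_epi f z : proper_fun f -> closed_fun f -> convex_fun f -> ~ epi f z ->
  exists a al be, al <= 0 /\
    (forall y r, epi f (y, r) -> dotp y a + al * r <= be) /\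
    be < dotp z.1 a + al * z.2.
Proof.
move=> fp fc fcv nz.
have [x1 [r1 E1]] := proper_fin fp.
have ep : epi f (x1, r1) by rewrite /epi /= E1.
have [a [al [be [h1 h2]]]] := @separation _ _ (epi f) z fc fcv (ex_intro _ (x1, r1) ep) nz.
have h y r : epi f (y, r) -> dotp y a + al * r <= be by move=> /h1.
exists a, al, be; split => //.
rewrite leNgt; apply/negP => al0.
pose s := (`|be - dotp x1 a - al * r1| + 1) / al.
have s0 : 0 <= s by rewrite /s divr_ge0 // ltW.
have ss : s * al = `|be - dotp x1 a - al * r1| + 1 by rewrite /s divfK // gt_eqF.
have := h x1 (r1 + s); rewrite /epi /= E1 lee_fin => /(_ (ler_wpDr s0 (lexx _))).
have := ler_norm (be - dotp x1 a - al * r1); nra.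
Qed.

Lemma nonvert f a al be : al < 0 ->
  (forall y r, epi f (y, r) -> dotp y a + al * r <= be) ->
  forall y r, epi f (y, r) -> dotp y ((- al)^-1 *: a) - r <= (- al)^-1 * be.
Proof.
move=> al0 h y r /h hy; rewrite dotpZr.
have k0 : 0 < (- al)^-1 by rewrite invr_gt0 oppr_gt0.
have kk : (- al)^-1 * al = -1.
  by rewrite -[X in _ * X]opprK mulrN mulVf // oppr_eq0 lt_eqF.
have := ler_wpM2l (ltW k0) hy; rewrite mulrDr mulrA kk; lra.
Qed.

Lemma KL f x c : proper_fun f -> closed_fun f -> convex_fun f ->
  (forall u, ((dotp x u - c)%:E <= conj_fun f u)%E) -> (f x <= c%:E)%E.
Proof.
move=> fp fc fcv hyp; rewrite leNgt; apply/negP => cx.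
have fn : forall y, f y != -oo%E by case: fp.
have nz : ~ epi f (x, c) by rewrite /epi /= leNgt cx.
have [a [al [be [al0 [h1 h2]]]]] := sep_epi fp fc fcv nz.
have [al_lt|al_eq] := ltP al 0.
  have := hyp ((- al)^-1 *: a).
  have := conj_le_epi fn (nonvert al_lt h1) => hc hh.
  have := le_trans hh hc; rewrite lee_fin dotpZr /=.
  have k0 : 0 < (- al)^-1 by rewrite invr_gt0 oppr_gt0.
  have kk : (- al)^-1 * al = -1.
    by rewrite -[X in _ * X]opprK mulrN mulVf // oppr_eq0 lt_eqF.
  have := h2; rewrite -(ltr_pM2l k0) mulrDr mulrA kk /=; lra.
have al00 : al = 0 by apply/eqP; rewrite eq_le al0 al_eq.
move: h1 h2; rewrite al00 /= => h1 h2.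
have [x1 [r1 E1]] := proper_fin fp.
have nz1 : ~ epi f (x1, r1 - 1) by rewrite /epi /= E1 lee_fin; lra.
have [a1 [al1 [be1 [al10 [h11 h12]]]]] := sep_epi fp fc fcv nz1.
have al1_lt : al1 < 0.
  have := h11 x1 r1; rewrite /epi /= E1 lexx => /(_ isT); simpl in h12; nra.
have hv := nonvert al1_lt h11.
set u1 := (- al1)^-1 *: a1 in hv; set d1 := (- al1)^-1 * be1 in hv.
pose D := d1 + c - dotp x u1.
pose t := (`|D| + 1) / (dotp x a - be).
have xb : 0 < dotp x a - be by simpl in h2; lra.
have t0 : 0 <= t by rewrite /t divr_ge0 // ltW.
have tt : t * (dotp x a - be) = `|D| + 1 by rewrite /t divfK // gt_eqF.
have hc : (conj_fun f (u1 + t *: a) <= (d1 + t * be)%:E)%E.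
  apply: conj_le_epi => // y r ey.
  have := hv _ _ ey; have := h1 _ _ ey; rewrite ?mul0r ?addr0 dotpDr !dotpZr.
  move=> ha hb; have := ler_wpM2l t0 ha; lra.
have := le_trans (hyp (u1 + t *: a)) hc; rewrite lee_fin dotpDr !dotpZr.
have hD := ler_norm D; rewrite /D /u1 dotpZr in hD; move: tt; rewrite /D /u1 dotpZr mulrBr; lra.
Qed.
End C.

Ltac clean := repeat match goal with
 | H : @eq (set _) _ _ |- _ => clear H
 | H : @eq (\bar _) _ _ |- _ => clear H
 | H : @eq (prod _ _) _ _ |- _ => clear H
 end.
Ltac clra := clean; lra.

Section D.
Context {R : realType} {n : nat}.
Implicit Types (f g : 'rV[R]_n -> \bar R) (x y u v : 'rV[R]_n).

Lemma Kmin_epi g (p : 'rV[R]_n * R) : (forall y, g y != -oo%E) ->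
  (Kminimal_point Kcone (epi g) p <-> g p.1 = p.2%:E).
Proof.
move=> gn; split.
  move=> [Ap H]; move: Ap (gn p.1); rewrite /epi /=.
  case E: (g p.1) => [s| |] //= Ap _; congr (_%:E).
  move: Ap; rewrite lee_fin => Ap.
  apply/eqP; rewrite eq_le Ap /=; rewrite leNgt; apply/negP => sp.
  have : ([set (p.1 - k.1, p.2 - k.2) | k in Kcone `\` [set (- q.1, - q.2) | q in Kcone]] `&` epi g)
     (p.1, s).
    split; last by rewrite /epi /= E.
    exists (0, p.2 - s).
      split; first by rewrite /Kcone /=; split => //; lra.
      move=> [q [q1 q2] /= [_ E2]]; clear -q2 E2 sp; lra.
    by rewrite /= subr0; congr (_, _); ring.
  by rewrite H.
move=> E; split; first by rewrite /epi /= E.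
rewrite predeqE => q; split => // [[[k [[k1 k2] nk] <-] Aq]].
move: Aq; rewrite /epi /= k1 subr0 E lee_fin => h.
apply: nk; exists (0, 0); first by rewrite /Kcone /=; split.
have k20 : k.2 = 0 by clear -h k2; lra.

rewrite [RHS]surjective_pairing k1 k20 /=; congr (_, _); apply/eqP; by rewrite oppr_eq0.
Qed.

Lemma expo g (F : set ('rV[R]_n * R)) : (forall y, g y != -oo%E) ->
  (exposed_face (epi g) F /\ Kminimal_face Kcone (epi g) F <->
   exists u c, (forall y r, epi g (y, r) -> dotp u y - r <= c) /\
     (exists y, g y = (dotp u y - c)%:E) /\
     F = [set p | g p.1 = p.2%:E /\ dotp u p.1 - p.2 = c]).
Proof.
move=> gn; split.
  move=> [[[a1 al] [b [a0 [[p0 [ep0 hp0]] [hsup HF]]]]] Kmin].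
  have Fp0 : F p0 by rewrite HF.
  have gp0 : g p0.1 = p0.2%:E by apply/(Kmin_epi _ gn); exact: Kmin.
  have ep1 : epi g (p0.1, p0.2 + 1) by rewrite /epi /= gp0 lee_fin; clra.
  move: hp0 (hsup _ ep1); rewrite /dotp1 /= => hp0 hs1.
  have al0 : al <= 0 by clra.
  have al_lt : al < 0.
    rewrite lt_neqAle al0 andbT; apply/negP => /eqP al00.
    have : F (p0.1, p0.2 + 1) by rewrite HF; split => //; move: hp0; rewrite /dotp1 /= al00; clra.
    move=> /Kmin /(Kmin_epi _ gn) /=; rewrite gp0 => /eqP; rewrite eqe; clra.
  pose k := (- al)^-1.
  have k0 : 0 < k by rewrite invr_gt0 oppr_gt0.
  have kk : k * al = -1.
    by rewrite /k -[X in _ * X]opprK mulrN mulVf // oppr_eq0 lt_eqF.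
  exists (k *: a1), (k * b); split; [|split].
  - move=> y r /hsup; rewrite /dotp1 /= dotpZl => h.
    have := ler_wpM2l (ltW k0) h; rewrite mulrDr mulrA kk; clra.
  - exists p0.1; rewrite gp0 dotpZl; congr (_%:E).
    rewrite -hp0 mulrDr mulrA kk; clra.
  - rewrite HF predeqE => p; split.
      move=> [ep hp]; have gp : g p.1 = p.2%:E.
        by apply/(Kmin_epi _ gn); apply: Kmin; rewrite HF.
      split => //; move: hp; rewrite /dotp1 /= dotpZl => <-.
      rewrite mulrDr mulrA kk; clra.
    move=> [gp hp]; split; first by rewrite /epi /= gp.
    rewrite /dotp1 /=; move: hp; rewrite dotpZl => hp.
    have kk2 : al * k = -1 by rewrite mulrC.
    have e := congr1 ( *%R al) hp; move: e; rewrite /= mulrBr !mulrA kk2; clra.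
move=> [u [c [hsup [[y Ey] HF]]]].
have Fmin : Kminimal_face Kcone (epi g) F.
  by move=> p; rewrite HF => -[gp _]; apply/(Kmin_epi _ gn).
split => //.
exists (u, -1), c; split; [|split; [|split]].
- apply/negP; rewrite xpair_eqE => /andP [_]; rewrite oppr_eq0 oner_eq0 //.
- exists (y, dotp u y - c); split; first by rewrite /epi /= Ey.
  by rewrite /dotp1 /=; clra.
- by move=> [z r] /hsup; rewrite /dotp1 /=; clra.
- rewrite HF predeqE => p; split.
    move=> [gp hp]; split; first by rewrite /epi /= gp.
    by rewrite /dotp1 /=; clra.
  move=> [ep]; rewrite /dotp1 /= => hp.
  have hc : dotp u p.1 - p.2 = c by clra.
  split => //.
  move: ep (gn p.1); rewrite /epi /=; case E: (g p.1) => [s| |] //= ep _.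
  move: ep; rewrite lee_fin => ep.
  have := hsup p.1 s; rewrite /epi /= E lexx => /(_ isT) h.
  congr (_%:E); clra.
Qed.
End D.
Section E.
Context {R : realType} {n : nat}.
Implicit Types (f g : 'rV[R]_n -> \bar R) (x y u v : 'rV[R]_n).

Lemma subeq1 f u c : (forall y, f y != -oo%E) ->
  (forall y r, epi f (y, r) -> dotp u y - r <= c) ->
  (exists y, f y = (dotp u y - c)%:E) ->
  forall x r, f x = r%:E -> (subdiff f x u <-> dotp u x - r = c).
Proof.
move=> fn hsup [y0 Ey0] x r Ex; split.
  move=> [_ h]; have := h y0; rewrite Ey0 Ex -EFinD lee_fin dotpBl (dotpC y0) (dotpC x).
  have := hsup x r; rewrite /epi /= Ex lexx => /(_ isT); clra.
move=> hc; split; first by rewrite Ex.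
move=> y; rewrite Ex; case E: (f y) => [s| |].
- rewrite -EFinD lee_fin dotpBl (dotpC y) (dotpC x).
  have := hsup y s; rewrite /epi /= E lexx => /(_ isT); clra.
- by rewrite leey.
- by have := fn y; rewrite E.
Qed.

Lemma conj_nn f : proper_fun f -> forall u, conj_fun f u != -oo%E.
Proof.
move=> fp u; have [x0 [r0 E0]] := proper_fin fp.
have := conj_ge f x0 u; rewrite E0 -EFinB.
by case: (conj_fun f u).
Qed.

Lemma subconj f x c v : f x = c%:E -> subdiff f x v ->
  conj_fun f v = (dotp x v - c)%:E.
Proof.
move=> Ex [_ h]; apply/eqP; rewrite eq_le; apply/andP; split.
  apply: conj_le => y; have := h y; rewrite Ex.
  case: (f y) => [s| |] //=.
  - by rewrite -EFinD -EFinB !lee_fin dotpBl; clra.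
  - by move=> _; rewrite leNye.
by have := conj_ge f x v; rewrite Ex -EFinB.
Qed.

Lemma subeq2 f x c : (forall y, f y != -oo%E) -> f x = c%:E ->
  forall v r, conj_fun f v = r%:E -> (subdiff f x v <-> dotp x v - r = c).
Proof.
move=> fn Ex v r Ev; split.
  by move=> /(subconj Ex); rewrite Ev => -[->]; clra.
move=> hc; split; first by rewrite Ex.
move=> y; rewrite Ex; case E: (f y) => [s| |].
- have := conj_ge f y v; rewrite Ev E -EFinB -EFinD !lee_fin dotpBl; clra.
- by rewrite leey.
- by have := fn y; rewrite E.
Qed.

End E.

Unset Implicit Arguments. Set Strict Implicit.
Theorem proposition3p2 (R : realType) (n : nat) (f : 'rV[R]_n -> \bar R) :
  proper_fun f -> closed_fun f -> convex_fun f ->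
  (forall F : set ('rV[R]_n * R), F `<=` epi f ->
     (exposed_face (epi f) F /\ Kminimal_face Kcone (epi f) F <->
      exists ub : 'rV[R]_n, dom (conj_fun f) ub /\
        (exists x, subdiff (conj_fun f) ub x) /\
        F = [set p | subdiff f p.1 ub /\ f p.1 = p.2%:E])) /\
  (forall Fs : set ('rV[R]_n * R), Fs `<=` epi (conj_fun f) ->
     (exposed_face (epi (conj_fun f)) Fs /\
        Kminimal_face Kcone (epi (conj_fun f)) Fs <->
      exists xb : 'rV[R]_n, dom f xb /\
        (exists u, subdiff f xb u) /\
        Fs = [set p | subdiff f xb p.1 /\ conj_fun f p.1 = p.2%:E])).
Proof.
move=> fp fc fcv.
have fn : forall y, f y != -oo%E by case: fp.
have gn := conj_nn fp.
split.
- move=> F _; rewrite (expo F fn); split.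
  + move=> [u [c [hsup [[y Ey] HF]]]].
    have hc : conj_fun f u = c%:E.
      apply/eqP; rewrite eq_le; apply/andP; split.
        by apply: (conj_le_epi fn) => z r /hsup; rewrite dotpC.
      have := conj_ge f y u; rewrite Ey -EFinB dotpC.
      by have -> : dotp u y - (dotp u y - c) = c by ring.
    exists u; split; first by rewrite /dom /= hc ltry.
    split.
      exists y; split; first by rewrite hc.
      move=> v; rewrite hc; have := conj_ge f y v; rewrite Ey -EFinB -EFinD.
      by rewrite dotpBl (dotpC v) (dotpC u); have -> : c + (dotp y v - dotp y u) = dotp y v - (dotp y u - c) by ring.
    rewrite HF predeqE => p; split.
      move=> [gp hp]; split => //; exact/(subeq1 fn hsup (ex_intro _ y Ey) gp).
    move=> [hs gp]; split => //; exact/(subeq1 fn hsup (ex_intro _ y Ey) gp).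
  + move=> [ub [dub [[x hx] HF]]].
    have [c Ec] : exists c, conj_fun f ub = c%:E.
      move: dub (gn ub); rewrite /dom /=; case: (conj_fun f ub) => [c| |] //= _ _.
      by exists c.
    have fle : (f x <= (dotp x ub - c)%:E)%E.
      apply: KL => // v; have := hx.2 v; rewrite Ec -EFinD; apply: le_trans.
      by rewrite lee_fin dotpBl (dotpC v) (dotpC ub); clra.
    have fx : f x = (dotp ub x - c)%:E.
      move: fle (fn x) (conj_ge f x ub); rewrite Ec.
      case: (f x) => [s| |] //=; rewrite ?lee_fin -?EFinB ?lee_fin => h1 _ h2.
      by rewrite dotpC; congr (_%:E); clra.
    have hsup : forall y r, epi f (y, r) -> dotp ub y - r <= c.
      have H : forall z, ((dotp z ub)%:E - f z <= c%:E)%E.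
        by move=> z; rewrite -Ec; exact: conj_ge.
      by move=> y r ey; rewrite dotpC; exact: (epi_of_sup H ey).
    exists ub, c; split => //; split; first by exists x.
    rewrite HF predeqE => p; split.
      move=> [hs gp]; split => //; exact/(subeq1 fn hsup (ex_intro _ x fx) gp).
    move=> [gp hp]; split => //; exact/(subeq1 fn hsup (ex_intro _ x fx) gp).
- move=> Fs _; rewrite (expo Fs gn); split.
  + move=> [u [c [hsup [[v0 Ev0] HF]]]].
    have fle : (f u <= c%:E)%E.
      apply: KL => // v; move: (gn v) (hsup v).
      case E: (conj_fun f v) => [s| |] //= _.
        by rewrite /epi /= E => /(_ s) h; rewrite lee_fin; have := h (lexx _); clra.
      by rewrite leey.
    have fu : f u = c%:E.
      move: fle (fn u) (conj_ge f u v0); rewrite Ev0.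
      case: (f u) => [s| |] //=; rewrite ?lee_fin -?EFinB ?lee_fin => h1 _ h2.
      by congr (_%:E); clra.
    exists u; split; first by rewrite /dom /= fu ltry.
    split.
      exists v0; apply/(subeq2 fn fu Ev0); clra.
    rewrite HF predeqE => p; split.
      move=> [gp hp]; split => //; exact/(subeq2 fn fu gp).
    move=> [hs gp]; split => //; exact/(subeq2 fn fu gp).
  + move=> [xb [dxb [[u0 hu0] HF]]].
    have [c Ec] : exists c, f xb = c%:E.
      move: dxb (fn xb); rewrite /dom /=; case: (f xb) => [c| |] //= _ _.
      by exists c.
    have hsup : forall v r, epi (conj_fun f) (v, r) -> dotp xb v - r <= c.
      move=> v r; rewrite /epi /=; have := conj_ge f xb v; rewrite Ec -EFinB.
      move=> h1 h2; have := le_trans h1 h2; rewrite lee_fin; clra.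
    have Eu0 := subconj Ec hu0.
    exists xb, c; split => //; split; first by exists u0.
    rewrite HF predeqE => p; split.
      move=> [hs gp]; split => //; exact/(subeq2 fn Ec gp).
    move=> [gp hp]; split => //; exact/(subeq2 fn Ec gp).
Qed.
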